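(* Let $n\ge2$. The space of homogeneous quasi-morphisms $F_n\to\mathbb{R}$ that vanish on every element of $\mathrm{cut}_n$ is infinite dimensional.
   Context: Fix a basis $a_1,\dots,a_n$ of $F_n$; $\bar g$ denotes $g^{-1}$. For a cyclically reduced word $w=l_1\cdots l_k$, its Whitehead graph $\Omega(w)$ has $2n$ vertices labeled $a_1,\dots,a_n,\bar a_1,\dots,\bar a_n$; for each pair of adjacent letters $l_il_{i+1}$ there is an edge joining $l_i$ and $\bar l_{i+1}$, and there is additionally an edge joining $l_k$ and $\bar l_1$; multiple edges between the same pair of vertices are replaced by a single edge. The Whitehead graph of a non-cyclically-reduced word is that of its cyclic reduction. A vertex is a cut vertex if removing it and its incident edges disconnects the graph. $\mathrm{cut}_n$ is the set of $w\in F_n$ such that $\Omega(w)$ has a cut vertex. A quasi-morphism $q:F_n\to\mathbb R$ satisfies $\sup_{g,h}|q(gh)-q(g)-q(h)|<\infty$; it is homogeneous if $q(g^k)=kq(g)$ for all $g$, $k\in\mathbb Z$. *)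

(* Defs.v *)
From Stdlib Require Import Reals ZArith.
From mathcomp Require Import all_boot.

Set Implicit Arguments.
Unset Strict Implicit.
Unset Printing Implicit Defensive.

(* Letters of F_n: (i, false) is a_i, (i, true) is \bar a_i. *)
Definition letter (n : nat) : finType := ('I_n * bool)%type.

Definition linv (n : nat) (x : letter n) : letter n := (x.1, ~~ x.2).

Fixpoint reduced (n : nat) (w : seq (letter n)) : bool :=
  match w with
  | x :: ((y :: _) as t) => (y != linv x) && reduced t
  | _ => true
  end.

Definition push (n : nat) (x : letter n) (s : seq (letter n)) : seq (letter n) :=
  match s with
  | y :: s' => if y == linv x then s' else x :: s
  | [::] => [:: x]
  end.

Definition red (n : nat) (w : seq (letter n)) : seq (letter n) := foldr (@push n) [::] w.

Lemma reduced_behead (n : nat) (x : letter n) s : reduced (x :: s) -> reduced s.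
Proof. by case: s => [|y s] //= /andP[]. Qed.

Lemma red_reduced (n : nat) (w : seq (letter n)) : reduced (red w).
Proof.
elim: w => [|x w IH] //=; rewrite -/(red w) /push.
case E: (red w) IH => [|y s] // IH.
case: ifP => [_|Hy]; first exact: reduced_behead IH.
by rewrite /= Hy; move: IH; rewrite /=.
Qed.

Definition FG (n : nat) := {w : seq (letter n) | reduced w}.

Definition mkFG (n : nat) (w : seq (letter n)) : FG n := exist _ (red w) (red_reduced w).

Definition word_inv (n : nat) (w : seq (letter n)) : seq (letter n) := rev (map (@linv n) w).

Definition fmul (n : nat) (g h : FG n) : FG n := mkFG (proj1_sig g ++ proj1_sig h).

Definition fpow (n : nat) (g : FG n) (k : Z) : FG n :=
  if (0 <=? k)%Z then mkFG (flatten (nseq (Z.to_nat k) (proj1_sig g)))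
  else mkFG (flatten (nseq (Z.to_nat (- k)) (word_inv (proj1_sig g)))).

Definition cyc_step (n : nat) (w : seq (letter n)) : seq (letter n) :=
  match w with
  | x :: ((_ :: _) as t) => if last x t == linv x then take (size t).-1 t else w
  | _ => w
  end.

Definition cyc_red (n : nat) (w : seq (letter n)) : seq (letter n) :=
  ssrnat.iter (size w) (@cyc_step n) w.

(* Whitehead graph of a cyclically reduced word w = l_1 ... l_k:
   an edge {l_i, \bar l_{i+1}} for each cyclically adjacent pair (indices mod k). *)
Definition wh_edges (n : nat) (w : seq (letter n)) : seq (letter n * letter n) :=
  map (fun p => (p.1, linv p.2)) (zip w (rot 1 w)).

Definition wh_adj (n : nat) (w : seq (letter n)) : rel (letter n) :=
  fun u v => has (fun p => (p == (u, v)) || (p == (v, u))) (wh_edges w).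

Definition cut_vertex (n : nat) (e : rel (letter n)) (v : letter n) : Prop :=
  exists x y : letter n, [/\ x != v, y != v &
    ~~ connect (fun a b => [&& e a b, a != v & b != v]) x y].

Definition Omega (n : nat) (g : FG n) : rel (letter n) := wh_adj (cyc_red (proj1_sig g)).

Definition in_cut (n : nat) (g : FG n) : Prop := exists v, cut_vertex (Omega g) v.

Definition quasimorphism (n : nat) (q : FG n -> R) : Prop :=
  exists D : R, forall g h : FG n, Rle (Rabs (Rminus (Rminus (q (fmul g h)) (q g)) (q h))) D.

Definition homogeneous (n : nat) (q : FG n -> R) : Prop :=
  forall (g : FG n) (k : Z), q (fpow g k) = Rmult (IZR k) (q g).

Definition lin_indep (n k : nat) (Q : nat -> FG n -> R) : Prop :=
  forall c : nat -> R,
    (forall g : FG n, foldr Rplus R0 (map (fun i => Rmult (c i) (Q i g)) (iota 0 k)) = R0) ->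
    forall i, (i < k)%N -> c i = R0.

(* Main.v *)
Require Import Defs.
From Stdlib Require Import Reals ZArith Lia.
From mathcomp Require Import all_boot zify.

Set Implicit Arguments.
Unset Strict Implicit.
Unset Printing Implicit Defensive.

Section Count.
Variables (T : eqType) (x0 : T).

Definition lmatch (u w : seq T) p :=
  (p + size u <= size w) && all (fun m => nth x0 w (p + m) == nth x0 u m) (iota 0 (size u)).
Definition lcnt u w := count (lmatch u w) (iota 0 (size w)).
Definition cmatch (u w : seq T) p :=
  all (fun m => nth x0 w ((p + m) %% size w) == nth x0 u m) (iota 0 (size u)).
Definition ccnt u w := count (cmatch u w) (iota 0 (size w)).

Lemma count_tail (P : pred nat) s k :
  (forall p, p < s - k -> ~~ P p) -> count P (iota 0 s) <= k.
Proof.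
move=> HP; case: (leqP k s) => hk.
  have -> : iota 0 s = iota 0 (s - k) ++ iota (s - k) k by rewrite -iotaD subnK.
  rewrite count_cat.
  have -> : count P (iota 0 (s - k)) = 0.
    apply/eqP; rewrite -leqn0 leqNgt -has_count; apply/hasPn => p.
    by rewrite mem_iota add0n => /andP[_ hp]; apply: HP.
  by rewrite add0n (leq_trans (count_size _ _)) // size_iota.
by rewrite (leq_trans (count_size _ _)) // size_iota ltnW.
Qed.

Lemma count_split (P Q : pred nat) (k : nat) s :
  (forall p, p < s -> P p -> Q p || (s < p + k)) ->
  count P (iota 0 s) <= count Q (iota 0 s) + k.
Proof.
move=> H.
pose B := fun p => s - k <= p.
apply: (@leq_trans (count (predU Q B) (iota 0 s))).
  apply: sub_count => p /= hP; case: (ltnP p s) => hp.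
    by case/orP: (H p hp hP) => [->//|h]; apply/orP; right; rewrite /B; lia.
  by apply/orP; right; rewrite /B; lia.
apply: (@leq_trans (count Q (iota 0 s) + count B (iota 0 s))).
  by rewrite -count_predUI leq_addr.
rewrite leq_add2l; apply: count_tail => p hp; rewrite /B; lia.
Qed.

Lemma lmatch_cat_r u s t q :
  lmatch u (s ++ t) (size s + q) = lmatch u t q.
Proof.
rewrite /lmatch size_cat -addnA leq_add2l; congr (_ && _).
apply: eq_all => m; rewrite nth_cat ltnNge -addnA leq_addr /=.
by rewrite addKn.
Qed.

Lemma lmatch_cat_l u s t p : lmatch u s p -> lmatch u (s ++ t) p.
Proof.
case/andP=> h1 /allP h2; apply/andP; split.
  by rewrite size_cat (leq_trans h1) ?leq_addr.
apply/allP => m hm; rewrite nth_cat.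
have : m < size u by move: hm; rewrite mem_iota.
move=> hmu; have -> : p + m < size s by lia.
exact: h2.
Qed.

Lemma lmatch_cat_l2 u s t p :
  lmatch u (s ++ t) p -> lmatch u s p || (size s < p + size u).
Proof.
case: (leqP (p + size u) (size s)) => h; last by rewrite orbT.
case/andP=> _ /allP h2; rewrite orbF; apply/andP; split => //.
apply/allP => m hm; have := h2 m hm; rewrite nth_cat.
have : m < size u by move: hm; rewrite mem_iota.
by move=> hmu; have -> : p + m < size s by lia.
Qed.

Lemma lcnt_cat u s t :
  lcnt u s + lcnt u t <= lcnt u (s ++ t) <= lcnt u s + lcnt u t + size u.
Proof.
rewrite /lcnt size_cat iotaD add0n count_cat.
have -> : iota (size s) (size t) = map (addn (size s)) (iota 0 (size t)).
  by rewrite -iotaDl addn0.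
rewrite count_map.
have -> : count (preim (addn (size s)) (lmatch u (s ++ t))) (iota 0 (size t))
          = count (lmatch u t) (iota 0 (size t)).
  by apply: eq_count => q /=; rewrite lmatch_cat_r.
apply/andP; split.
  rewrite leq_add2r; apply: sub_count => p; exact: lmatch_cat_l.
rewrite addnAC leq_add2r; apply: count_split => p _ hp.
exact: lmatch_cat_l2 hp.
Qed.

Lemma ccnt_lcnt u w : lcnt u w <= ccnt u w <= lcnt u w + size u.
Proof.
apply/andP; split.
  apply: sub_count => p /andP[h1 /allP h2]; apply/allP => m hm.
  have : m < size u by move: hm; rewrite mem_iota.
  move=> hmu; rewrite modn_small; first exact: h2.
  lia.
apply: count_split => p hp /allP h.
case: (leqP (p + size u) (size w)) => h1; last by rewrite orbT.
apply/orP; left; apply/andP; split => //; apply/allP => m hm.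
have : m < size u by move: hm; rewrite mem_iota.
move=> hmu; have := h m hm; rewrite modn_small //; lia.
Qed.

Lemma flatten_nseqS k (w : seq T) : flatten (nseq k.+1 w) = flatten (nseq k w) ++ w.
Proof. by elim: k => [|k IH] /=; rewrite ?cats0 // -catA -IH. Qed.

Lemma size_pow k (w : seq T) : size (flatten (nseq k w)) = k * size w.
Proof. by elim: k => [|k IH] //=; rewrite size_cat IH mulSn. Qed.

Lemma nth_pow k (w : seq T) i : i < k * size w ->
  nth x0 (flatten (nseq k w)) i = nth x0 w (i %% size w).
Proof.
elim: k i => [|k IH] i //=; rewrite mulSn => hi; rewrite nth_cat.
case: (ltnP i (size w)) => h; first by rewrite modn_small.
rewrite IH; last by lia.
by rewrite -{2}(subnK h) modnDr.
Qed.

Lemma count_mod (f : pred nat) d k :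
  count (fun p => f (p %% d)) (iota 0 (k * d)) = k * count (fun p => f (p %% d)) (iota 0 d).
Proof.
elim: k => [|k IH] //; rewrite mulSn iotaD add0n count_cat.
have -> : iota d (k * d) = map (addn d) (iota 0 (k * d)) by rewrite -iotaDl addn0.
rewrite count_map [in RHS]mulSn -IH; congr (_ + _); apply: eq_count => p /=.
by rewrite modnDl.
Qed.

Lemma ccnt_pow u k w : ccnt u (flatten (nseq k w)) = k * ccnt u w.
Proof.
case: k => [|k]; first by rewrite /ccnt.
case: w => [|x w']; first by rewrite /ccnt size_pow /= !muln0.
set w := x :: w'.
have hw : 0 < size w by [].
rewrite /ccnt size_pow.
have E : forall p, cmatch u (flatten (nseq k.+1 w)) p = cmatch u w (p %% size w).
  move=> p; rewrite /cmatch size_pow; apply: eq_all => m.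
  rewrite nth_pow; last by rewrite ltn_pmod // muln_gt0.
  by rewrite (@modn_dvdm (k.+1 * size w)) ?dvdn_mull // modnDml.
rewrite (eq_count E) count_mod; congr (_ * _).
apply: eq_in_count => p; rewrite mem_iota add0n => /andP[_ hp] /=.
by rewrite modn_small.
Qed.

End Count.

Section Free.
Variable n : nat.
Notation L := (letter n).
Notation winv := (@word_inv n).

Lemma linvK (x : L) : linv (linv x) = x.
Proof. by case: x => a b; rewrite /linv /= negbK. Qed.

Lemma linv_neq (x : L) : (linv x == x) = false.
Proof. by case: x => a b; rewrite /linv /= xpair_eqE eqxx /=; case: b. Qed.

Lemma linv_eqE (x y : L) : (linv x == y) = (x == linv y).
Proof. by apply/eqP/eqP => [<-|->]; rewrite linvK. Qed.

Lemma winv_cat (a b : seq L) : winv (a ++ b) = winv b ++ winv a.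
Proof. by rewrite /word_inv map_cat rev_cat. Qed.

Lemma winvK (a : seq L) : winv (winv a) = a.
Proof.
rewrite /word_inv map_rev revK -map_comp.
by rewrite (eq_map (g := id)) ?map_id // => x /=; rewrite linvK.
Qed.

Lemma winv_cons (x : L) a : winv (x :: a) = winv a ++ [:: linv x].
Proof. by rewrite -cat1s winv_cat. Qed.

Lemma winv_rcons (x : L) a : winv (rcons a x) = linv x :: winv a.
Proof. by rewrite /word_inv map_rcons rev_rcons. Qed.

Lemma size_winv (a : seq L) : size (winv a) = size a.
Proof. by rewrite /word_inv size_rev size_map. Qed.

Definition rr (a b : L) := b != linv a.

Lemma reducedE (s : seq L) : reduced s = sorted rr s.
Proof.
have R2 : forall (x y : L) s, reduced [:: x, y & s] = (y != linv x) && reduced (y :: s) by [].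
by elim: s => [|x [|y s] IH] //; rewrite R2 IH.
Qed.

Lemma reduced_winv (s : seq L) : reduced s -> reduced (winv s).
Proof.
rewrite !reducedE /word_inv rev_sorted sorted_map.
apply: sub_sorted => a b /=; rewrite /rr /= linvK eq_sym.
by [].
Qed.

Lemma push_reduced (x : L) s : reduced s -> reduced (push x s).
Proof.
case: s => [|y s] //= H; case: ifP => [_|Hy]; first exact: reduced_behead H.
by rewrite /= Hy H.
Qed.

Lemma red_id (s : seq L) : reduced s -> red s = s.
Proof.
elim: s => // x s IH H; rewrite /red /= -/(red s) IH; last exact: reduced_behead H.
by case: s H {IH} => [|y s] //= /andP[h _]; rewrite (negbTE h).
Qed.

Lemma pushK (x : L) t : reduced t -> push x (push (linv x) t) = t.
Proof.
case: t => [|y t] /=; first by rewrite ?linvK eqxx.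
case: ifP => [/eqP Ey|Hy] H.
  rewrite linvK in Ey; subst y.
  case: t H => [|z t] //= /andP[hz _].
  by rewrite (negbTE hz).
by rewrite /= eqxx.
Qed.

Lemma foldr_reduced (t : seq L) p : reduced t -> reduced (foldr (@push n) t p).
Proof. by move=> Ht; elim: p => //= x p IH; apply: push_reduced. Qed.

Lemma foldr_push (t : seq L) x s : reduced t ->
  foldr (@push n) t (push x s) = push x (foldr (@push n) t s).
Proof.
move=> Ht; case: s => [|y s] //=; case: ifP => [/eqP ->|] //.
by rewrite pushK // foldr_reduced.
Qed.

Lemma foldr_red (t : seq L) p : reduced t ->
  foldr (@push n) t p = foldr (@push n) t (red p).
Proof.
move=> Ht; elim: p => //= x p IH.
by rewrite /red /= -/(red p) foldr_push // IH.
Qed.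

Lemma red_cat (p q : seq L) : red (p ++ q) = foldr (@push n) (red q) p.
Proof. by rewrite /red foldr_cat. Qed.

Lemma red_cancel (a b : seq L) x : red (a ++ x :: linv x :: b) = red (a ++ b).
Proof.
rewrite !red_cat; congr foldr.
by rewrite /red /= -/(red b) pushK // red_reduced.
Qed.

Lemma red_cancel_inv (a b c : seq L) : red (a ++ winv c ++ c ++ b) = red (a ++ b).
Proof.
elim: c a b => [|x c IH] a b //=.
rewrite winv_cons -catA /= catA.
have := red_cancel (a ++ winv c) (c ++ b) (linv x); rewrite linvK => ->.
by rewrite -catA IH.
Qed.

Lemma red_cancel_inv2 (a b c : seq L) : red (a ++ c ++ winv c ++ b) = red (a ++ b).
Proof. by rewrite -{1}(winvK c) red_cancel_inv. Qed.

Lemma mul_decomp (g h : seq L) : reduced g -> reduced h ->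
  exists a c b, [/\ g = a ++ c, h = winv c ++ b & foldr (@push n) h g = a ++ b].
Proof.
move=> + Hh; elim: g => [|x g IH] Hg.
  by exists [::], [::], h.
have [a [c [b [E1 E2 E3]]]] := IH (reduced_behead Hg).
rewrite /= E3.
case: a E1 E3 => [|y a] E1 E3.
  case: b E2 E3 => [|y b] E2 E3.
    by exists [:: x], c, [::]; rewrite E1.
  rewrite /=; case: ifP => [/eqP Ey|Ey].
    exists [::], (x :: c), b; split => //; first by rewrite E1.
    by rewrite E2 winv_cons -catA Ey.
  by exists [:: x], c, (y :: b); rewrite E1 /= ?Ey.
exists (x :: y :: a), c, b; split => //; first by rewrite E1.
move: Hg; rewrite E1 /= => /andP[hy _]; by rewrite (negbTE hy).
Qed.

Definition crb (w : seq L) := if w is x :: t then last x t != linv x else true.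

Lemma crb_fix w : crb w -> cyc_step w = w.
Proof. by case: w => [|x [|y t]] //= h; rewrite (negbTE h). Qed.

Lemma fix_crb w : cyc_step w = w -> crb w.
Proof.
case: w => [|x [|y t]] //=; first by rewrite eq_sym linv_neq.
case: ifP => // _ E.
have := congr1 size E; rewrite size_take /=.
case: ifP => _ /=; lia.
Qed.

Lemma crb_winv w : crb w -> crb (winv w).
Proof.
case: w => [|x t] //=; case/lastP: t => [|t z] /=.
  by rewrite /word_inv /= linvK eq_sym linv_neq.
rewrite last_rcons winv_cons winv_rcons /= last_cat /= linvK => h.
by rewrite eq_sym.
Qed.

Lemma cyc_step_cases (w : seq L) :
  cyc_step w = w \/ exists x t, w = x :: t ++ [:: linv x] /\ cyc_step w = t.
Proof.
case: w => [|x [|y t]]; try by left.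
rewrite /cyc_step; case: ifP => [/eqP E|]; last by left.
right; exists x, (belast y t); split.
  by rewrite lastI E cats1.
by rewrite lastI size_rcons /= -cats1 take_size_cat.
Qed.

Lemma cyc_decomp (s : seq L) m : exists c, s = c ++ iter m (@cyc_step n) s ++ winv c.
Proof.
elim: m => [|m [c Ec]] /=; first by exists [::]; rewrite cats0.
case: (cyc_step_cases (iter m (@cyc_step n) s)) => [->|[x [t [E1 E2]]]].
  by exists c.
exists (rcons c x); rewrite E2 winv_rcons {1}Ec E1 -cat_rcons.
by rewrite cats0 cat_rcons /= -cats1 -catA.
Show.
Qed.

Lemma cyc_red_fix (s : seq L) : cyc_step (cyc_red s) = cyc_red s.
Proof.
rewrite /cyc_red.
have H : forall m, cyc_step (iter m (@cyc_step n) s) = iter m (@cyc_step n) s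
           \/ size (iter m (@cyc_step n) s) + 2 * m <= size s.
  elim=> [|m [IH|IH]]; first by right; rewrite addn0.
    by left; rewrite /= IH IH.
  case: (cyc_step_cases (iter m (@cyc_step n) s)) => [E|[x [t [E1 E2]]]].
    by left; rewrite /= E E.
  right; rewrite /= E2; move: IH; rewrite E1 /= size_cat /=; lia.
case: (H (size s)) => // h.
case: (cyc_step_cases (iter (size s) (@cyc_step n) s)) => [//|[x [t [E1 _]]]].
move: h; rewrite E1 /= size_cat /=; lia.
Qed.

Lemma reduced_cat_l (a b : seq L) : reduced (a ++ b) -> reduced a.
Proof. rewrite !reducedE; case: a => //= x a; rewrite cat_path; by case/andP. Qed.

Lemma reduced_cat_r (a b : seq L) : reduced (a ++ b) -> reduced b.
Proof. by elim: a => //= x a IH H; apply: IH; apply: reduced_behead H. Qed.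

Lemma cyc_red_reduced (s : seq L) : reduced s -> reduced (cyc_red s).
Proof.
have [c Ec] := cyc_decomp s (size s); rewrite /cyc_red {1}Ec => H.
exact: reduced_cat_l (reduced_cat_r H).
Qed.

Lemma strip1 (x : L) s : cyc_step (x :: s ++ [:: linv x]) = s.
Proof.
case: s => [|y s]; first by rewrite /= eqxx.
rewrite /cyc_step /= last_cat /= eqxx size_cat addn1 /=.
by rewrite take_size_cat.
Qed.

Lemma cyc_strip (c w : seq L) : iter (size c) (@cyc_step n) (c ++ w ++ winv c) = w.
Proof.
elim: c => [|x c IH]; first by rewrite /= cats0.
rewrite [size _]/= iterSr winv_cons.
by rewrite cat_cons !catA strip1 -!catA.
Qed.

Lemma cyc_red_mid (c w : seq L) : cyc_step w = w -> cyc_red (c ++ w ++ winv c) = w.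
Proof.
move=> Hw; rewrite /cyc_red.
have h : size c <= size (c ++ w ++ winv c) by rewrite size_cat leq_addr.
by rewrite -(subnK h) iterD cyc_strip iter_fix.
Qed.

Lemma flatten_nseq_nil k : flatten (nseq k ([::] : seq L)) = [::].
Proof. by elim: k. Qed.

Lemma winv_pow k (w : seq L) : winv (flatten (nseq k w)) = flatten (nseq k (winv w)).
Proof.
elim: k => [|k IH] //; rewrite [in LHS]/= winv_cat IH.
by rewrite -flatten_nseqS.
Qed.

Lemma pow_red (c w : seq L) k :
  red (flatten (nseq k.+1 (c ++ w ++ winv c))) = red (c ++ flatten (nseq k.+1 w) ++ winv c).
Proof.
elim: k => [|k IH]; first by rewrite /= !cats0.
have -> : flatten (nseq k.+2 (c ++ w ++ winv c)) =
  (c ++ w ++ winv c) ++ flatten (nseq k.+1 (c ++ w ++ winv c)) by [].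
rewrite (red_cat (c ++ w ++ winv c)) IH -red_cat.
have -> : flatten (nseq k.+2 w) = w ++ flatten (nseq k.+1 w) by [].
have := red_cancel_inv (c ++ w) (flatten (nseq k.+1 w) ++ winv c) c.
by rewrite -!catA => ->.
Qed.

Lemma reduced_mid (a b1 b2 d : seq L) y : path rr y b2 -> last y b1 = last y b2 ->
  reduced (a ++ y :: b1 ++ d) -> reduced (a ++ y :: b2 ++ d).
Proof.
rewrite !reducedE !sorted_cat_cons !cat_path => hp hl /and3P[h1 _ h3].
by rewrite h1 hp -hl h3.
Qed.

Lemma path_pow (x : L) t k : path rr x t -> rr (last x t) x ->
  path rr x (t ++ flatten (nseq k (x :: t))).
Proof.
move=> hp hl; elim: k => [|k IH]; first by rewrite cats0.
have -> : flatten (nseq k.+1 (x :: t)) = x :: t ++ flatten (nseq k (x :: t)) by [].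
by rewrite cat_path hp /= hl IH.
Qed.

Lemma pow_struct (c w : seq L) k : reduced (c ++ w ++ winv c) -> cyc_step w = w ->
  cyc_red (red (flatten (nseq k (c ++ w ++ winv c)))) = flatten (nseq k w).
Proof.
move=> Hr Hw; case: k => [|k]; first by [].
rewrite pow_red.
case: w Hr Hw => [|x t] Hr Hw.
  rewrite flatten_nseq_nil /=.
  by have := red_cancel_inv2 [::] [::] c; rewrite /= cats0 => ->.
have Hl : last x t != linv x by have := fix_crb Hw.
have Hp : path rr x t by move: Hr; rewrite reducedE sorted_cat_cons cat_path => /and3P[].
set W := flatten (nseq k.+1 (x :: t)).
have EW : W = x :: (t ++ flatten (nseq k (x :: t))) by [].
have LW : last x (t ++ flatten (nseq k (x :: t))) = last x t.
  by case: (k) => [|k1]; [rewrite cats0 | rewrite flatten_nseqS !last_cat].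
have HWr : reduced (c ++ W ++ winv c).
  rewrite EW; apply: (reduced_mid (b1 := t)) => //.
    by apply: path_pow => //; rewrite /rr -linv_eqE eq_sym.
rewrite red_id // cyc_red_mid //; apply: crb_fix.
by rewrite EW /= LW.
Qed.

End Free.


Section Wh.
Variable n : nat.
Notation L := (letter n).
Notation winv := (@word_inv n).
Variable x0 : L.

Lemma wh_sym (w : seq L) a b : wh_adj w a b = wh_adj w b a.
Proof. by rewrite /wh_adj; apply: eq_has => p; rewrite orbC. Qed.

Lemma nth_rot1 (w : seq L) i : i < size w -> nth x0 (rot 1 w) i = nth x0 w (i.+1 %% size w).
Proof.
case: w => [|y w] //= hi; rewrite rot1_cons nth_rcons.
case: (ltnP i (size w)) => h.
  by rewrite modn_small.
have -> : i = size w by apply/eqP; rewrite eqn_leq h andbT -ltnS.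
by rewrite eqxx modnn.
Qed.

Lemma wh_pos (w : seq L) i : i < size w ->
  wh_adj w (nth x0 w i) (linv (nth x0 w (i.+1 %% size w))).
Proof.
move=> hi; apply/hasP; exists (nth (x0, x0) (wh_edges w) i).
  by apply: mem_nth; rewrite /wh_edges size_map size_zip size_rot minnn.
rewrite /wh_edges (nth_map (x0, x0)); last by rewrite size_zip size_rot minnn.
by rewrite nth_zip ?size_rot //= nth_rot1 // eqxx.
Qed.

Lemma wh_pos_inv (w : seq L) i : i < size w ->
  wh_adj w (nth x0 (winv w) i) (linv (nth x0 (winv w) (i.+1 %% size w))).
Proof.
move=> hi; have hw : 0 < size w by lia.
have hj : i.+1 %% size w < size w by rewrite ltn_pmod.
rewrite /word_inv !nth_rev ?size_map // !(nth_map x0) ?size_map; try lia.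
rewrite linvK wh_sym.
set j := size w - (i.+1 %% size w).+1.
have -> : size w - i.+1 = j.+1 %% size w.
  rewrite /j; case: (ltnP i.+1 (size w)) => h.
    rewrite (modn_small h) modn_small; lia.
  have -> : i.+1 = size w by lia.
  rewrite modnn; have -> : (size w - 1).+1 = size w by lia.
  by rewrite modnn subnn.
apply: wh_pos; rewrite /j; lia.
Qed.

Lemma match_edges (u V W : seq L) :
  (forall i, i < size V -> wh_adj W (nth x0 V i) (linv (nth x0 V (i.+1 %% size V)))) ->
  forall p, p < size V -> cmatch x0 u V p ->
  forall m, m.+1 < size u -> wh_adj W (nth x0 u m) (linv (nth x0 u m.+1)).
Proof.
move=> HV p hp /allP hm m hmu.
have hV : 0 < size V by lia.
have i1 : m \in iota 0 (size u) by rewrite mem_iota; lia.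
have i2 : m.+1 \in iota 0 (size u) by rewrite mem_iota; lia.
have e1 := eqP (hm m i1).
have e2 := eqP (hm m.+1 i2).
rewrite -e1 -e2.
have := HV ((p + m) %% size V) (ltn_pmod _ hV).
by rewrite -addn1 modnDml addn1 addnS.
Qed.

Lemma infix_edge (e : rel L) (u : seq L) :
  (forall m, m.+1 < size u -> e (nth x0 u m) (linv (nth x0 u m.+1))) ->
  forall p x y q, u = p ++ x :: y :: q -> e x (linv y).
Proof.
move=> E p x y q Eu; have := E (size p).
rewrite Eu !nth_cat ltnn subnn /=.
have -> : ((size p).+1 < size p) = false by lia.
have -> : (size p).+1 - size p = 1 by lia.
by apply; rewrite size_cat /=; lia.
Qed.

Lemma hub_nocut (e : rel L) (a0 : L) : symmetric e -> e a0 (linv a0) ->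
  (forall x, [\/ x = a0, x = linv a0 | e a0 x /\ e x (linv a0)]) ->
  forall v, ~ cut_vertex e v.
Proof.
move=> Hs H0 Hx v [x [y [hx hy hxy]]].
set e' := fun a b => [&& e a b, a != v & b != v].
have Hs' : connect_sym e'.
  apply: sym_connect_sym => a b; rewrite /e' Hs.
  by case: (b != v); case: (a != v); rewrite ?andbF ?andbT.
pose r := if v == a0 then linv a0 else a0.
have hr : forall z, z != v -> connect e' z r.
  move=> z hz; rewrite /r; case: ifP => /eqP hv.
    subst v; case: (Hx z) => [hz0|->|[_ h]]; first by rewrite hz0 eqxx in hz.
      exact: connect0.
    by apply: connect1; rewrite /e' h hz linv_neq.
  case: (Hx z) => [hz0|hz0|[h _]]; first by subst z; exact: connect0.
    subst z; apply: connect1; rewrite /e' Hs H0 hz /=.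
    by apply/eqP=> hh; apply: hv.
  apply: connect1; rewrite /e' Hs h hz /=; apply/eqP=> hh; by apply: hv.
move/negP: hxy; apply; apply: (connect_trans (hr x hx)).
by rewrite Hs'; apply: hr.
Qed.

End Wh.


Section QM.
Variable n : nat.
Notation L := (letter n).
Notation winv := (@word_inv n).
Variable x0 : L.
Variable u : seq L.

Definition Cz (s : seq L) : Z :=
  (Z.of_nat (lcnt x0 u s) - Z.of_nat (lcnt x0 u (winv s)))%Z.
Definition Zq (s : seq L) : Z :=
  (Z.of_nat (ccnt x0 u (cyc_red s)) - Z.of_nat (ccnt x0 u (winv (cyc_red s))))%Z.

Lemma lcat (s t : seq L) :
  (Z.of_nat (lcnt x0 u s) + Z.of_nat (lcnt x0 u t) <= Z.of_nat (lcnt x0 u (s ++ t)) /\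
   Z.of_nat (lcnt x0 u (s ++ t)) <=
     Z.of_nat (lcnt x0 u s) + Z.of_nat (lcnt x0 u t) + Z.of_nat (size u))%Z.
Proof.
case/andP: (lcnt_cat x0 u s t) => h1 h2; rewrite -!Nat2Z.inj_add.
by split; apply/Nat2Z.inj_le/leP; [exact: h1|exact: h2].
Qed.

Lemma ccat (w : seq L) :
  (Z.of_nat (lcnt x0 u w) <= Z.of_nat (ccnt x0 u w) /\
   Z.of_nat (ccnt x0 u w) <= Z.of_nat (lcnt x0 u w) + Z.of_nat (size u))%Z.
Proof.
case/andP: (ccnt_lcnt x0 u w) => h1 h2; rewrite -!Nat2Z.inj_add.
by split; apply/Nat2Z.inj_le/leP; [exact: h1|exact: h2].
Qed.

Lemma Cz_mul a b c : (Z.abs (Cz (a ++ b) - Cz (a ++ c) - Cz (winv c ++ b)) <= 3 * Z.of_nat (size u))%Z.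
Proof.
rewrite /Cz !winv_cat winvK.
have := lcat a b; have := lcat (winv b) (winv a); have := lcat a c.
have := lcat (winv c) (winv a); have := lcat (winv c) b; have := lcat (winv b) c.
lia.
Qed.

Lemma Zq_Cz s : (Z.abs (Zq s - Cz s) <= 4 * Z.of_nat (size u))%Z.
Proof.
have [c Ec] := cyc_decomp s (size s).
rewrite /Zq /Cz; rewrite -/(cyc_red s) in Ec.
set w := cyc_red s in Ec *.
rewrite Ec !winv_cat winvK -catA.
have := lcat c (w ++ winv c); have := lcat w (winv c).
have := lcat c (winv w ++ winv c); have := lcat (winv w) (winv c).
have := ccat w; have := ccat (winv w).
lia.
Qed.

Definition qq (g : FG n) : R := IZR (Zq (proj1_sig g)).

Lemma qq_quasi : quasimorphism qq.
Proof.
exists (IZR (15 * Z.of_nat (size u))) => g h.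
rewrite /qq -!minus_IZR Rabs_Zabs; apply: IZR_le.
case: g => g Hg; case: h => h Hh; rewrite /fmul /mkFG; cbn [proj1_sig].
rewrite red_cat (red_id Hh).
have [a [c [b [E1 E2 E3]]]] := mul_decomp Hg Hh.
rewrite E3 E1 E2.
have := @Cz_mul a b c.
have := @Zq_Cz (a ++ b); have := @Zq_Cz (a ++ c); have := @Zq_Cz (winv c ++ b).
lia.
Qed.

Lemma Zq_pow (s : seq L) k : reduced s ->
  Zq (red (flatten (nseq k s))) = (Z.of_nat k * Zq s)%Z /\
  Zq (red (flatten (nseq k (winv s)))) = (- (Z.of_nat k * Zq s))%Z.
Proof.
move=> Hs.
have [c Ec] := cyc_decomp s (size s); rewrite -/(cyc_red s) in Ec.
have Hw := cyc_red_fix s.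
set w := cyc_red s in Ec Hw *.
have Hw' : cyc_step (winv w) = winv w by apply: crb_fix; apply: crb_winv; apply: fix_crb.
have Ei : winv s = c ++ winv w ++ winv c by rewrite {1}Ec !winv_cat winvK catA.
have P1 : cyc_red (red (flatten (nseq k s))) = flatten (nseq k w).
  by rewrite {1}Ec pow_struct // -Ec.
have P2 : cyc_red (red (flatten (nseq k (winv s)))) = flatten (nseq k (winv w)).
  by rewrite Ei pow_struct // -Ei reduced_winv.
rewrite /Zq -/w P1 P2 !winv_pow !ccnt_pow winvK; split; lia.
Qed.

Lemma qq_homog : homogeneous qq.
Proof.
move=> [g Hg] k; rewrite /qq /fpow /= -mult_IZR; congr IZR.
case: (Z.leb_spec0 0 k) => hk /=.
  by case: (Zq_pow (Z.to_nat k) Hg) => -> _; rewrite Z2Nat.id.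
case: (Zq_pow (Z.to_nat (- k)) Hg) => _ ->; rewrite Z2Nat.id; lia.
Qed.

End QM.


Section Zero.
Variables (T : eqType) (x0 : T).

Lemma ccnt0 (u W : seq T) : (forall p, p < size W -> ~~ cmatch x0 u W p) -> ccnt x0 u W = 0.
Proof.
move=> H; apply/eqP; rewrite -leqn0 leqNgt -has_count; apply/hasPn => p.
by rewrite mem_iota add0n => /andP[_ hp]; apply: H.
Qed.

Lemma head_absent (u W : seq T) a : 0 < size u -> nth x0 u 0 = a -> a \notin W ->
  ccnt x0 u W = 0.
Proof.
move=> hu h0 ha; apply: ccnt0 => p hp; apply/negP => /allP H.
have := H 0; rewrite mem_iota hu addn0 h0 => /(_ isT) /eqP E.
move/negP: ha; apply; rewrite -E; apply: mem_nth; rewrite ltn_pmod //; lia.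
Qed.

Lemma window (u W : seq T) a r K : r < size W -> nth x0 W r != a -> size W <= K ->
  K < size u -> (forall m, m < K -> nth x0 u m = a) -> ccnt x0 u W = 0.
Proof.
move=> hr hna hK hKu hu; apply: ccnt0 => p hp; apply/negP => /allP H.
set L := size W.
have hL : 0 < L by lia.
set m := (r + L - p) %% L.
have hm : m < L by rewrite ltn_pmod.
have := H m; rewrite mem_iota add0n.
have -> : m < size u by lia.
move=> /(_ isT) /eqP E.
have : (p + m) %% L = r.
  rewrite /m modnDmr.
  have -> : p + (r + L - p) = r + L by lia.
  by rewrite modnDr modn_small.
move=> Er; rewrite Er hu in E; last by lia.
by rewrite E eqxx in hna.
Qed.

End Zero.


Section Concrete.
Variable m : nat.
Notation N := m.+2.
Notation L := (letter N).
Notation winv := (@word_inv N).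

Definition a0 : L := (ord0, false).
Definition al (j : nat) (b : bool) : L := (inord j, b).
Definition blk j : seq L := [:: a0; al j false; a0; al j true].
Definition FF : seq L := flatten (map blk (iota 1 m.+1)).
Definition MM := 4 * m.+1 + 2.
Definition uu i : seq L := nseq (MM * i).+1 a0 ++ FF ++ [:: a0].

Lemma inord_ne0 j : 0 < j < N -> (inord j : 'I_N) != ord0.
Proof.
move=> /andP[h1 h2]; apply/eqP => h; have := congr1 val h.
rewrite /= inordK //=; lia.
Qed.

Lemma size_blks js : size (flatten (map blk js)) = 4 * size js.
Proof. by elim: js => //= j js IH; rewrite IH mulnS. Qed.

Lemma size_uu i : size (uu i) = MM * i.+1.
Proof.
rewrite /uu !size_cat size_nseq /FF size_blks size_iota /MM mulnS /=; lia.
Qed.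

Lemma linv_a0 : linv a0 = (ord0, true).
Proof. by []. Qed.

Lemma rr_a0a0 : rr a0 a0.
Proof. by rewrite /rr eq_sym linv_neq. Qed.

Lemma path_nseq k (s : seq L) : path (@rr N) a0 (nseq k a0 ++ s) = path (@rr N) a0 s.
Proof. by elim: k => //= k ->; rewrite rr_a0a0. Qed.

Lemma path_blks js (x : L) : (forall j, j \in js -> 0 < j < N) -> x != linv a0 ->
  path (@rr N) x (flatten (map blk js) ++ [:: a0]).
Proof.
elim: js x => [|j js IH] x Hj hx.
  by rewrite /= /rr andbT eq_sym linv_eqE.
have hj := inord_ne0 (Hj j (mem_head _ _)).
rewrite /= -/(flatten _) /rr.
apply/and5P; split.
- by rewrite eq_sym linv_eqE.
- by rewrite /al /a0 /linv /= xpair_eqE negb_and hj.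
- by rewrite /al /a0 /linv /= xpair_eqE negb_and orbT.
- by rewrite /al /a0 /linv /= xpair_eqE negb_and hj.
apply: IH; first by move=> j' hj'; apply: Hj; rewrite in_cons hj' orbT.
by rewrite /al /a0 /linv /= xpair_eqE negb_and hj.
Qed.

Lemma iota_mem j : j \in iota 1 m.+1 -> 0 < j < N.
Proof. by rewrite mem_iota; lia. Qed.

Lemma reduced_uu i : reduced (uu i).
Proof.
rewrite reducedE /uu.
change (path (@rr N) a0 (nseq (MM * i) a0 ++ FF ++ [:: a0])).
rewrite path_nseq; apply: path_blks.
  exact: iota_mem.
by rewrite eq_sym linv_neq.
Qed.

Lemma cyc_red_uu i : cyc_red (uu i) = uu i.
Proof.
rewrite /cyc_red iter_fix //; apply: crb_fix.
change (last a0 (nseq (MM * i) a0 ++ FF ++ [:: a0]) != linv a0).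
by rewrite !last_cat.
Qed.

Lemma nth_uu_low i p : p <= MM * i -> nth a0 (uu i) p = a0.
Proof. by move=> h; rewrite /uu nth_cat size_nseq ltnS h nth_nseq ltnS h. Qed.

Lemma nth_uu_r j : nth a0 (uu j) (MM * j).+2 = al 1 false.
Proof.
rewrite /uu nth_cat size_nseq ltnNge leqnSn /=.
have -> : (MM * j).+2 - (MM * j).+1 = 1 by lia.
by [].
Qed.

Lemma al1_ne : al 1 false != a0.
Proof. by rewrite /al /a0 xpair_eqE negb_and inord_ne0. Qed.

Lemma linv_a0_blks js : (forall j, j \in js -> 0 < j < N) ->
  linv a0 \notin flatten (map blk js).
Proof.
elim: js => [|j js IH] Hj //.
have hj0 := inord_ne0 (Hj j (mem_head _ _)).
rewrite /= -/(flatten _) !in_cons (negbTE (IH _)); last first.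
  by move=> j' hj'; apply: Hj; rewrite in_cons hj' orbT.
rewrite /a0 /al /linv /= !xpair_eqE /=.
by rewrite eq_sym (negbTE hj0).
Qed.

Lemma linv_a0_notin i : linv a0 \notin uu i.
Proof.
rewrite /uu mem_cat mem_nseq linv_neq andbF orFb mem_cat mem_seq1 linv_neq orbF.
by apply: linv_a0_blks; apply: iota_mem.
Qed.

Lemma a0_notin_inv i : a0 \notin winv (uu i).
Proof.
rewrite /word_inv mem_rev; apply/negP => /mapP [x hx hx0].
move: (linv_a0_notin i); rewrite hx0 linvK hx.
by [].
Qed.

Lemma nseqS_r k (x : L) : nseq k.+1 x = nseq k x ++ [:: x].
Proof. by elim: k => //= k <-. Qed.

Lemma uu_hub i : uu i = nseq (MM * i) a0 ++ [:: a0, a0 & behead FF ++ [:: a0]].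
Proof. by rewrite /uu nseqS_r -catA. Qed.

Lemma tail_a0 js : exists R, flatten (map blk js) ++ [:: a0] = a0 :: R.
Proof. by case: js => [|j js]; eexists. Qed.

Lemma uu_blk i j : 0 < j < N ->
  exists P R, uu i = P ++ [:: a0, al j false, a0, al j true, a0 & R].
Proof.
move=> hj.
have E : iota 1 m.+1 = iota 1 j.-1 ++ j :: iota j.+1 (m.+1 - j).
  rewrite -[in LHS](_ : j.-1 + (m.+1 - j).+1 = m.+1); last by lia.
  rewrite iotaD; congr (_ ++ _).
  have -> : 1 + j.-1 = j by lia.
  by [].
have [R ER] := tail_a0 (iota j.+1 (m.+1 - j)).
exists (nseq (MM * i).+1 a0 ++ flatten (map blk (iota 1 j.-1))), R.
rewrite /uu /FF E map_cat flatten_cat -!catA.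
rewrite -[X in blk j ++ X ++ _]/(flatten (map blk (iota j.+1 (m.+1 - j)))) ER.
by [].
Qed.

Lemma nocut_uu i (W : seq L) :
  (forall mm, mm.+1 < size (uu i) -> wh_adj W (nth a0 (uu i) mm) (linv (nth a0 (uu i) mm.+1))) ->
  forall v, ~ cut_vertex (wh_adj W) v.
Proof.
move=> E.
have IE := @infix_edge N a0 (wh_adj W) (uu i) E.
apply: (@hub_nocut N (wh_adj W) a0).
- by move=> a b; apply: wh_sym.
- exact: IE _ _ _ _ (uu_hub i).
move=> [x1 b].
case: (x1 =P ord0) => h.
  by subst x1; case: b; [apply: Or32 | apply: Or31].
have hj : 0 < val x1 < N.
  rewrite ltn_ord andbT lt0n; apply/eqP => h0; apply: h; exact: val_inj.
have ex : (x1, b) = al (val x1) b by rewrite /al inord_val.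
have [P [R ER]] := uu_blk i hj.
set j := val x1 in ex ER.
have e1 := IE P a0 (al j false) _ ER.
have e2 := IE (rcons P a0) (al j false) a0 _ (etrans ER (esym (cat_rcons _ _ _))).
have ER3 : uu i = (P ++ [:: a0; al j false]) ++ [:: a0, al j true, a0 & R] by rewrite ER -catA.
have ER4 : uu i = (P ++ [:: a0; al j false; a0]) ++ [:: al j true, a0 & R] by rewrite ER -catA.
have e3 := IE _ a0 (al j true) _ ER3.
have e4 := IE _ (al j true) a0 _ ER4.
apply: Or33; rewrite ex; clear ex; case: b; split => //.
Qed.

Lemma ccnt_pos_match (u V : seq L) : 0 < ccnt a0 u V -> exists p, p < size V /\ cmatch a0 u V p.
Proof.
rewrite -has_count => /hasP [p]; rewrite mem_iota add0n => /andP[_ hp] hm.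
by exists p.
Qed.

Lemma Q_cut i (g : FG N) : in_cut g -> qq a0 (uu i) g = R0.
Proof.
move=> [v hv]; rewrite /qq.
set W := cyc_red (proj1_sig g).
have hv' : cut_vertex (wh_adj W) v by exact: hv.
suff [h1 h2] : ccnt a0 (uu i) W = 0 /\ ccnt a0 (uu i) (winv W) = 0.
  by rewrite /Zq -/W h1 h2.
split.
  case: (posnP (ccnt a0 (uu i) W)) => // /ccnt_pos_match [p [hp hm]].
  exfalso; apply: (nocut_uu (match_edges (@wh_pos N a0 W) hp hm) hv').
case: (posnP (ccnt a0 (uu i) (winv W))) => // /ccnt_pos_match [p [hp hm]].
have HV : forall k, k < size (winv W) ->
    wh_adj W (nth a0 (winv W) k) (linv (nth a0 (winv W) (k.+1 %% size (winv W)))).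
  by rewrite size_winv; apply: wh_pos_inv.
exfalso; apply: (nocut_uu (match_edges HV hp hm) hv').
Qed.

Lemma proj_test j : proj1_sig (mkFG (uu j)) = uu j.
Proof. exact: red_id (reduced_uu j). Qed.

Lemma MM_gt : 5 < MM.
Proof. rewrite /MM; lia. Qed.

Lemma Zq_test_gt i j : j < i -> Zq a0 (uu i) (uu j) = 0%Z.
Proof.
move=> hij; rewrite /Zq cyc_red_uu.
have hM := MM_gt.
rewrite (@head_absent _ a0 (uu i) (winv (uu j)) a0); first last.
- exact: a0_notin_inv.
- by rewrite nth_uu_low.
- by rewrite size_uu; lia.
rewrite (@window _ a0 (uu i) (uu j) a0 (MM * j).+2 (MM * i)) //.
- by rewrite size_uu mulnS; lia.
- by rewrite nth_uu_r al1_ne.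
- by rewrite size_uu leq_mul2l hij orbT.
- by rewrite size_uu ltn_mul2l; lia.
by move=> k hk; rewrite nth_uu_low // ltnW.
Qed.

Lemma Zq_test_eq j : (0 < Zq a0 (uu j) (uu j))%Z.
Proof.
rewrite /Zq cyc_red_uu (@head_absent _ a0 (uu j) (winv (uu j)) a0); first last.
- exact: a0_notin_inv.
- by rewrite nth_uu_low.
- by rewrite size_uu; have := MM_gt; lia.
suff : 0 < ccnt a0 (uu j) (uu j) by lia.
rewrite -has_count; apply/hasP; exists 0.
  by rewrite mem_iota size_uu; have := MM_gt; lia.
apply/allP => k; rewrite mem_iota add0n => /andP[_ hk].
by rewrite modn_small.
Qed.

End Concrete.


Lemma foldr_zero (f : nat -> R) a k : (forall i, a <= i < a + k -> f i = R0) ->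
  foldr Rplus R0 (map f (iota a k)) = R0.
Proof.
elim: k a => [|k IH] a H //=.
rewrite H; last by lia.
rewrite IH; first by rewrite Rplus_0_r.
by move=> i hi; apply: H; lia.
Qed.

Lemma foldr_single (f : nat -> R) a k j : a <= j < a + k ->
  (forall i, a <= i < a + k -> i <> j -> f i = R0) ->
  foldr Rplus R0 (map f (iota a k)) = f j.
Proof.
elim: k a => [|k IH] a hj H; first by lia.
rewrite /=; have [ej|hne] := eqVneq a j.
  subst j; rewrite foldr_zero ?Rplus_0_r // => i hi.
  by apply: H; lia.
rewrite H; last first.
- by move=> e; rewrite e eqxx in hne.
- by lia.
rewrite IH ?Rplus_0_l //.
- move/eqP: hne; lia.
by move=> i hi; apply: H; lia.
Qed.


Theorem mainTheorem11 (n : nat) (hn : (2 <= n)%N) :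
  forall k : nat, exists Q : nat -> FG n -> R,
    (forall i, (i < k)%N ->
       [/\ quasimorphism (Q i), homogeneous (Q i) &
           forall g : FG n, in_cut g -> Q i g = R0])
    /\ lin_indep k Q.
Proof.
case: n hn => [|[|m]] // _ k.
exists (fun i => qq (a0 m) (uu m i)); split.
  move=> i _; split; [exact: qq_quasi | exact: qq_homog | exact: Q_cut].
move=> c Hc i hi; elim/ltn_ind: i hi => j IHj hj.
have := Hc (mkFG (uu m j)).
rewrite (@foldr_single _ 0 k j); first last.
- move=> i hi hne; case: (ltngtP i j) => hij.
  + by rewrite IHj // ?Rmult_0_l //; lia.
  + by rewrite /qq proj_test Zq_test_gt // Rmult_0_r.
  + by case: hne.
- by lia.
rewrite /qq proj_test => /Rmult_integral [//|h].
have := Zq_test_eq m j; move: h => /eq_IZR ->; lia.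
Qed.
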